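(* Let $f_{1,\infty}=\{f_n\}$ be a sequence of continuous maps $f_n:[0,1]\to[0,1]$ converging uniformly to $f$, such that $\{f_n^k\}_{k\in\mathbb{N}}$ converges collectively to $\{f^k\}_{k\in\mathbb{N}}$ and $f_{1,\infty}$ is feebly open. Then the following are equivalent for $([0,1],f_{1,\infty})$: (1) it is strongly multi-sensitive; (2) it is $\mathcal{N}$-sensitive; (3) it is multi-sensitive; (4) it is sensitive.
   Context: Usual metric $d$ on $[0,1]$. Write $f_i^n=f_{n+i-1}\circ\cdots\circ f_i$, $f_i^0=\mathrm{id}$. Collective convergence: for every $\epsilon>0$ there is $N_0$ such that $\sup_x d(f_N^k(x),f^k(x))<\epsilon$ for all $N\ge N_0$ and all $k\in\mathbb{N}$. Feebly open: $\mathrm{int}(f_n(U))\ne\varnothing$ for every nonempty open $U$ and every $n$. $f_{1,\infty}^{[k]}=\{f^k_{k(n-1)+1}\}_{n=1}^\infty$ (its $n$-fold composition from index $1$ is $f_1^{kn}$). $N_{f_{1,\infty}}(V,\delta)=\{n\in\mathbb{N}:\exists u,v\in V,\ d(f_1^n(u),f_1^n(v))>\delta\}$. Sensitive: there is $\delta>0$ with $N_{f_{1,\infty}}(V,\delta)\ne\varnothing$ for all nonempty open $V$. Multi-sensitive: there is $\delta>0$ with $\bigcap_{i=1}^m N_{f_{1,\infty}}(V_i,\delta)\ne\varnothing$ for every finite collection of nonempty open $V_1,\dots,V_m$. For $\mathbf{v}=(v_1,\dots,v_r)\in\mathbb{N}^r$, multi-sensitive with respect to $\mathbf{v}$: there is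 $\delta>0$ such that $\bigcap_{i=1}^r N_{f_{1,\infty}^{[v_i]}}(U_i,\delta)\ne\varnothing$ for all nonempty open $U_1,\dots,U_r$; $\mathcal{N}$-sensitive: multi-sensitive with respect to $(1,\dots,n)$ for every $n$; strongly multi-sensitive: multi-sensitive with respect to every vector in $\mathbb{N}^r$, for every $r$. *)

(* Defs.v *)
From Stdlib Require Import Reals Lra Lia List.
Open Scope R_scope.

Definition I01 : Type := {x : R | 0 <= x <= 1}.
Definition dist (x y : I01) : R := Rabs (proj1_sig x - proj1_sig y).

Definition open_I (U : I01 -> Prop) : Prop :=
  forall x, U x -> exists eps, 0 < eps /\ forall y, dist x y < eps -> U y.
Definition nonempty_open (U : I01 -> Prop) : Prop :=
  open_I U /\ exists x, U x.

Definition continuous_I (g : I01 -> I01) : Prop :=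
  forall x eps, 0 < eps -> exists delta, 0 < delta /\
    forall y, dist x y < delta -> dist (g x) (g y) < eps.

(** A non-autonomous system f_{1,oo} = {f_n}_{n>=1}, encoded as f : nat -> I01 -> I01;
    the value f 0 is never used. *)

Fixpoint fcomp (f : nat -> I01 -> I01) (i n : nat) : I01 -> I01 :=
  match n with
  | O => fun x => x
  | S m => fun x => f (m + i)%nat (fcomp f i m x)
  end.

Definition uniform_conv (f : nat -> I01 -> I01) (g : I01 -> I01) : Prop :=
  forall eps, 0 < eps -> exists N0, forall n, (1 <= n)%nat -> (N0 <= n)%nat ->
    forall x, dist (f n x) (g x) < eps.

(** {f_N^k}_k converges collectively to {f^k}_k :
    sup_x d(f_N^k x, f^k x) < eps for all N >= N0 and all k. *)
Definition collective_conv (f : nat -> I01 -> I01) (g : I01 -> I01) : Prop :=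
  forall eps, 0 < eps -> exists N0, forall N, (1 <= N)%nat -> (N0 <= N)%nat ->
    forall k : nat, exists c, c < eps /\
      forall x, dist (fcomp f N k x) (Nat.iter k g x) <= c.

Definition feebly_open (f : nat -> I01 -> I01) : Prop :=
  forall n, (1 <= n)%nat -> forall U, nonempty_open U ->
    exists W, nonempty_open W /\ forall y, W y -> exists x, U x /\ f n x = y.

Definition blockseq (f : nat -> I01 -> I01) (k : nat) : nat -> I01 -> I01 :=
  fun n => fcomp f (k * (n - 1) + 1)%nat k.

Definition in_Nset (f : nat -> I01 -> I01) (V : I01 -> Prop) (delta : R) (n : nat) : Prop :=
  (1 <= n)%nat /\ exists u v, V u /\ V v /\ dist (fcomp f 1 n u) (fcomp f 1 n v) > delta.

Definition sensitive (f : nat -> I01 -> I01) : Prop :=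
  exists delta, 0 < delta /\ forall V, nonempty_open V -> exists n, in_Nset f V delta n.

Definition multi_sensitive (f : nat -> I01 -> I01) : Prop :=
  exists delta, 0 < delta /\ forall (m : nat) (V : nat -> I01 -> Prop),
    (forall i, (i < m)%nat -> nonempty_open (V i)) ->
    exists n, forall i, (i < m)%nat -> in_Nset f (V i) delta n.

Definition multi_sensitive_wrt (f : nat -> I01 -> I01) (v : list nat) : Prop :=
  exists delta, 0 < delta /\ forall U : nat -> I01 -> Prop,
    (forall i, (i < length v)%nat -> nonempty_open (U i)) ->
    exists n, (1 <= n)%nat /\ forall i, (i < length v)%nat ->
      in_Nset (blockseq f (nth i v 0%nat)) (U i) delta n.

Definition N_sensitive (f : nat -> I01 -> I01) : Prop :=
  forall n, (1 <= n)%nat -> multi_sensitive_wrt f (seq 1 n).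

Definition strongly_multi_sensitive (f : nat -> I01 -> I01) : Prop :=
  forall v : list nat, Forall (fun k => (1 <= k)%nat) v -> multi_sensitive_wrt f v.

(* Main.v *)
Require Import Defs.
From Stdlib Require Import Reals Lra Lia List.
From Stdlib Require Import Psatz ZArith ProofIrrelevance Classical.
Import Defs.
Open Scope R_scope.

Definition val (x : I01) : R := proj1_sig x.

Lemma val_bounds (x : I01) : 0 <= val x <= 1.
Proof. destruct x; simpl; auto. Qed.

Lemma I01_eq (x y : I01) : val x = val y -> x = y.
Proof. destruct x as [x hx], y as [y hy]; unfold val; simpl; intros ->. f_equal. apply proof_irrelevance. Qed.

Lemma dist_sym x y : dist x y = dist y x.
Proof. unfold dist. apply Rabs_minus_sym. Qed.

Lemma dist_tri x y z : dist x z <= dist x y + dist y z.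
Proof. unfold dist. replace (proj1_sig x - proj1_sig z) with ((proj1_sig x - proj1_sig y) + (proj1_sig y - proj1_sig z)) by ring. apply Rabs_triang. Qed.

Lemma dist_ge0 x y : 0 <= dist x y.
Proof. unfold dist; apply Rabs_pos. Qed.

Lemma dist_refl x : dist x x = 0.
Proof. unfold dist. replace (proj1_sig x - proj1_sig x) with 0 by ring. apply Rabs_R0. Qed.

Lemma dist0 x y : dist x y <= 0 -> x = y.
Proof. intros H. apply I01_eq. unfold dist, val in *. unfold Rabs in H. destruct (Rcase_abs _) in H; lra. Qed.

Lemma dist4 A B a b : dist a b - dist A a - dist B b <= dist A B.
Proof. pose proof (dist_tri a A b). pose proof (dist_tri A B b). rewrite (dist_sym a A) in *. lra. Qed.

Lemma fcomp_add f i a b x : fcomp f i (a + b) x = fcomp f (i + a) b (fcomp f i a x).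
Proof.
  induction b as [|b IH].
  - rewrite Nat.add_0_r. reflexivity.
  - rewrite Nat.add_succ_r. simpl. rewrite IH. f_equal. lia.
Qed.

Lemma Fshift f m k x : fcomp f 1 (m + k) x = fcomp f (m+1) k (fcomp f 1 m x).
Proof. rewrite fcomp_add. replace (1 + m)%nat with (m+1)%nat by lia. reflexivity. Qed.

Lemma iter_add (g : I01 -> I01) a b x : Nat.iter (a + b) g x = Nat.iter a g (Nat.iter b g x).
Proof. induction a as [|a IH]; simpl; auto. rewrite IH. auto. Qed.

Lemma fcomp_cont f i n : (forall n, (1 <= n)%nat -> continuous_I (f n)) -> (1 <= i)%nat -> continuous_I (fcomp f i n).
Proof.
  intros Hc Hi. induction n as [|n IH]; simpl.
  - intros x eps He. exists eps. split; auto.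
  - intros x eps He. destruct (Hc (n+i)%nat ltac:(lia) (fcomp f i n x) eps He) as [d1 [Hd1 H1]].
    destruct (IH x d1 Hd1) as [d2 [Hd2 H2]]. exists d2; split; auto.
Qed.

Lemma unif_fin f (Hc : forall n, (1 <= n)%nat -> continuous_I (f n)) m w eps : 0 < eps ->
  exists r, 0 < r /\ forall j z, (j <= m)%nat -> dist w z < r -> dist (fcomp f 1 j w) (fcomp f 1 j z) < eps.
Proof.
 intros He. induction m as [|m IH].
 - exists eps. split; auto. intros j z Hj Hz. assert (j = 0%nat) by lia. subst. simpl. exact Hz.
 - destruct IH as [r0 [Hr0 H0]]. destruct (fcomp_cont f 1 (S m) Hc (le_n 1) w eps He) as [r1 [Hr1 H1]].
   exists (Rmin r0 r1). split. apply Rmin_pos; auto.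
   intros j z Hj Hz. destruct (Nat.eq_dec j (S m)) as [->|Hne].
   + apply H1. eapply Rlt_le_trans; [exact Hz| apply Rmin_r].
   + apply H0. lia. eapply Rlt_le_trans; [exact Hz| apply Rmin_l].
Qed.

Definition ball (x : I01) r := fun y => dist x y < r.
Lemma ball_open x r : open_I (ball x r).
Proof. intros y Hy. exists (r - dist x y). split. unfold ball in Hy; lra. intros z Hz. unfold ball. pose proof (dist_tri x y z). lra. Qed.
Lemma ball_neo x r : 0 < r -> nonempty_open (ball x r).
Proof. split. apply ball_open. exists x. unfold ball. rewrite dist_refl. auto. Qed.
Lemma ball_convex x r u v w : ball x r u -> ball x r v -> Rmin (val u) (val v) <= val w <= Rmax (val u) (val v) -> ball x r w.
Proof.
  unfold ball, dist, val. intros Hu Hv [H1 H2].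
  apply Rabs_def2 in Hu. apply Rabs_def2 in Hv.
  destruct (Rle_dec (proj1_sig u) (proj1_sig v)).
  - rewrite Rmin_left, Rmax_right in * by lra. apply Rabs_def1; lra.
  - rewrite Rmin_right, Rmax_left in * by lra. apply Rabs_def1; lra.
Qed.

Definition clampR (x : R) : R := Rmin 1 (Rmax 0 x).
Lemma clamp_ok x : 0 <= clampR x <= 1.
Proof. unfold clampR, Rmin, Rmax. repeat match goal with |- context [Rle_dec ?a ?b] => destruct (Rle_dec a b) | H : context [Rle_dec ?a ?b] |- _ => destruct (Rle_dec a b) end; lra. Qed.
Definition clamp (x:R) : I01 := exist _ (clampR x) (clamp_ok x).
Lemma clampR_id x : 0 <= x <= 1 -> clampR x = x.
Proof. intros. unfold clampR, Rmin, Rmax. repeat match goal with |- context [Rle_dec ?a ?b] => destruct (Rle_dec a b) | H : context [Rle_dec ?a ?b] |- _ => destruct (Rle_dec a b) end; lra. Qed.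
Lemma clamp_val (u : I01) : clamp (val u) = u.
Proof. apply I01_eq. unfold clamp at 1. unfold val at 1. simpl. apply clampR_id. apply val_bounds. Qed.
Lemma clamp_lip x y : Rabs (clampR x - clampR y) <= Rabs (x - y).
Proof. unfold clampR, Rmin, Rmax. repeat match goal with |- context [Rle_dec ?a ?b] => destruct (Rle_dec a b) | H : context [Rle_dec ?a ?b] |- _ => destruct (Rle_dec a b) end; unfold Rabs; repeat destruct (Rcase_abs _); lra. Qed.

Lemma H_cont hh : continuous_I hh -> continuity (fun x => val (hh (clamp x))).
Proof.
  intros Hc x. unfold continuity_pt, continue_in, limit1_in, limit_in. intros eps He.
  destruct (Hc (clamp x) eps He) as [d [Hd H]]. exists d. split; auto.
  intros y [_ Hy]. simpl in *. unfold R_dist in *.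
  rewrite Rabs_minus_sym. apply H. unfold dist. simpl. eapply Rle_lt_trans; [apply clamp_lip|]. rewrite Rabs_minus_sym. exact Hy.
Qed.

Lemma ivt01 hh : continuous_I hh -> forall u v : I01, forall y, Rmin (val (hh u)) (val (hh v)) <= y <= Rmax (val (hh u)) (val (hh v)) ->
  exists w : I01, Rmin (val u) (val v) <= val w <= Rmax (val u) (val v) /\ val (hh w) = y.
Proof.
  intros Hc u v y Hy.
  assert (HH : continuity (fun x => val (hh (clamp x)) - y)).
  { apply (continuity_minus (fun x => val (hh (clamp x))) (fun _ => y)). apply H_cont; auto. apply continuity_const. intros ? ?; auto. }
  assert (Key : forall a b : I01, val a <= val b -> Rmin (val (hh a)) (val (hh b)) <= y <= Rmax (val (hh a)) (val (hh b)) ->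
     exists w : I01, val a <= val w <= val b /\ val (hh w) = y).
  { intros a b Hab Hy'.
    destruct (IVT_cor _ (val a) (val b) HH Hab) as [z [Hz Hz0]].
    - rewrite !clamp_val. unfold Rmin, Rmax in Hy'. destruct (Rle_dec _ _) in Hy'; nra.
    - exists (clamp z). pose proof (val_bounds a). pose proof (val_bounds b).
      assert (val (clamp z) = z) by (unfold clamp, val at 1; simpl; apply clampR_id; lra).
      rewrite H1. split; [lra|]. lra. }
  destruct (Rle_dec (val u) (val v)).
  - destruct (Key u v r Hy) as [w [Hw1 Hw2]]. exists w. rewrite Rmin_left, Rmax_right by lra. auto.
  - destruct (Key v u ltac:(lra)) as [w [Hw1 Hw2]].
    + rewrite Rmin_comm, Rmax_comm. auto.
    + exists w. rewrite Rmin_right, Rmax_left by lra. auto.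
Qed.
Lemma cell_select h : 0 < h -> exists M, forall p q, 0 <= p -> q <= 1 -> 2*h <= q - p ->
  exists i, (i < M)%nat /\ p <= INR i * h /\ (INR i + 1) * h <= q.
Proof.
  intros Hh. exists (Z.to_nat (up (1/h))). intros p q Hp Hq Hpq.
  destruct (archimed (p/h)) as [H1 H2].
  destruct (archimed (1/h)) as [H3 H4].
  assert (Hph : 0 <= p/h) by (unfold Rdiv; apply Rmult_le_pos; [lra| left; apply Rinv_0_lt_compat; lra]).
  assert (Hs : (1/h) * h = 1) by (field; lra).
  assert (Hr : (p/h) * h = p) by (field; lra).
  set (z := up (p/h)) in *. set (s := 1/h) in *. set (r := p/h) in *.
  assert (Hz0 : (0 < z)%Z) by (apply lt_IZR; simpl; lra).
  exists (Z.to_nat z).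
  assert (E : INR (Z.to_nat z) = IZR z) by (rewrite INR_IZR_INZ, Z2Nat.id; [reflexivity| lia]).
  rewrite E.
  assert (A1 : p <= IZR z * h) by nra.
  assert (A2 : (IZR z + 1) * h <= q) by nra.
  split; [|split; auto].
  assert (IZR z < s) by nra.
  assert (Hzs : (z < up s)%Z) by (apply lt_IZR; lra).
  apply Z2Nat.inj_lt; lia.
Qed.

Lemma min_fin (D : nat -> R) k : (forall j, (j <= k)%nat -> 0 < D j) -> exists b, 0 < b /\ forall j, (j <= k)%nat -> b <= D j.
Proof.
  induction k as [|k IH]; intros HD.
  - exists (D 0%nat). split. apply HD; lia. intros j Hj. assert (j = 0%nat) by lia. subst; lra.
  - destruct IH as [b0 [Hb0 Hb]]. intros j Hj; apply HD; lia.
    exists (Rmin b0 (D (S k))). split. { apply Rmin_pos; auto. }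
    intros j Hj. destruct (Nat.eq_dec j (S k)) as [->|Hne]. apply Rmin_r.
    eapply Rle_trans; [apply Rmin_l| apply Hb; lia].
Qed.

Lemma a_lemma (g : I01 -> I01) (P : nat -> I01 -> Prop) (thr : R) (M : nat) : 0 <= thr ->
  exists a, 0 < a /\ forall i, (i < M)%nat ->
   (exists k, (1 <= k)%nat /\ exists c1 c2, P i c1 /\ P i c2 /\ dist (Nat.iter k g c1) (Nat.iter k g c2) > thr) ->
   exists k, (1 <= k)%nat /\ exists c1 c2, P i c1 /\ P i c2 /\ dist (Nat.iter k g c1) (Nat.iter k g c2) > thr /\
     forall j, (j <= k)%nat -> a <= dist (Nat.iter j g c1) (Nat.iter j g c2).
Proof.
  intros Hthr. induction M as [|M IH].
  - exists 1. split. lra. intros; lia.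
  - destruct IH as [a0 [Ha0 HA0]].
    destruct (classic (exists k, (1 <= k)%nat /\ exists c1 c2, P M c1 /\ P M c2 /\ dist (Nat.iter k g c1) (Nat.iter k g c2) > thr)) as [Hr|Hn].
    + destruct Hr as [k [Hk [c1 [c2 [P1 [P2 Hd]]]]]].
      destruct (min_fin (fun j => dist (Nat.iter j g c1) (Nat.iter j g c2)) k) as [b [Hb HB]].
      { intros j Hj. destruct (Rlt_le_dec 0 (dist (Nat.iter j g c1) (Nat.iter j g c2))) as [|Hle]; auto.
        apply dist0 in Hle. exfalso.
        replace k with ((k - j) + j)%nat in Hd by lia. rewrite !iter_add, Hle, dist_refl in Hd. lra. }
      exists (Rmin a0 b). split. apply Rmin_pos; auto.
      intros i Hi Hri. destruct (Nat.eq_dec i M) as [->|Hne].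
      * exists k. split; auto. exists c1, c2. repeat split; auto. intros j Hj. eapply Rle_trans; [apply Rmin_r| apply HB; auto].
      * destruct (HA0 i ltac:(lia) Hri) as [k' [Hk' [d1 [d2 [Q1 [Q2 [Qd QA]]]]]]].
        exists k'. split; auto. exists d1, d2. repeat split; auto. intros j Hj. eapply Rle_trans; [apply Rmin_l| apply QA; auto].
    + exists a0. split; auto. intros i Hi Hri. destruct (Nat.eq_dec i M) as [->|Hne].
      * contradiction.
      * apply HA0; auto. lia.
Qed.

Lemma coll_lt f g e : collective_conv f g -> 0 < e -> exists N0, forall N k x, (1 <= N)%nat -> (N0 <= N)%nat -> dist (fcomp f N k x) (Nat.iter k g x) < e.
Proof.
  intros H He. destruct (H e He) as [N0 HN]. exists N0. intros N k x H1 H2.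
  destruct (HN N H1 H2 k) as [c [Hc Hx]]. specialize (Hx x). lra.
Qed.

Definition Cell h (i : nat) (x : I01) := INR i * h < val x < (INR i + 1) * h.

Lemma RmaxRmin a b : Rmax a b - Rmin a b = Rabs (a - b).
Proof. unfold Rmax, Rmin, Rabs. destruct (Rle_dec a b); destruct (Rcase_abs (a - b)); lra. Qed.

Lemma dist4' a b A B : dist a b - dist a A - dist b B <= dist A B.
Proof. pose proof (dist4 A B a b). rewrite (dist_sym A a), (dist_sym B b) in H. lra. Qed.

Definition cofin f := exists d, 0 < d /\ forall U, nonempty_open U -> exists m0, (1 <= m0)%nat /\ forall n, (m0 <= n)%nat -> in_Nset f U d n.

Lemma sens_cof f g : (forall n, (1 <= n)%nat -> continuous_I (f n)) -> collective_conv f g -> sensitive f -> cofin f.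
Proof.
  intros Hc Hcoll [del [Hdel Hsens]].
  destruct (cell_select (del/8) ltac:(lra)) as [M HM].
  destruct (a_lemma g (Cell (del/8)) (del/2) M ltac:(lra)) as [a [Ha HA]].
  assert (Hex : exists e, 0 < e /\ e <= del/8 /\ e <= a/4).
  { exists (Rmin (del/8) (a/4)). split. apply Rmin_pos; lra. split. apply Rmin_l. apply Rmin_r. }
  destruct Hex as [e [He [He1 He2]]].
  destruct (coll_lt f g e Hcoll He) as [N0 HN0].
  set (N := S N0).
  assert (Fcont : forall j, continuous_I (fcomp f 1 j)) by (intros; apply fcomp_cont; auto).
  assert (REL : forall m (V : I01 -> Prop) w i, (N <= m)%nat -> open_I V -> V w -> val (fcomp f 1 m w) = (INR i + /2) * (del/8) ->
     exists k, (1 <= k)%nat /\ exists c1 c2, Cell (del/8) i c1 /\ Cell (del/8) i c2 /\ dist (Nat.iter k g c1) (Nat.iter k g c2) > del/2).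
  { intros m V w i Hm HV Hw Hv.
    destruct (HV w Hw) as [r1 [Hr1 Hb1]].
    destruct (Fcont m w (del/16) ltac:(lra)) as [r2 [Hr2 Hb2]].
    destruct (unif_fin f Hc m w (del/2) ltac:(lra)) as [r3 [Hr3 Hb3]].
    set (r := Rmin r1 (Rmin r2 r3)).
    assert (Hr : 0 < r) by (unfold r; repeat apply Rmin_pos; auto).
    assert (Hrr : r <= r2 /\ r <= r3).
    { unfold r. split. eapply Rle_trans; [apply Rmin_r| apply Rmin_l]. eapply Rle_trans; [apply Rmin_r| apply Rmin_r]. }
    destruct (Hsens (ball w r) (ball_neo w r Hr)) as [n [Hn [z1 [z2 [Hz1 [Hz2 Hd]]]]]].
    unfold ball in Hz1, Hz2.
    destruct (le_lt_dec n m) as [Hnm|Hnm].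
    - exfalso. pose proof (Hb3 n z1 Hnm ltac:(lra)). pose proof (Hb3 n z2 Hnm ltac:(lra)).
      pose proof (dist_tri (fcomp f 1 n z1) (fcomp f 1 n w) (fcomp f 1 n z2)).
      rewrite (dist_sym (fcomp f 1 n z1) (fcomp f 1 n w)) in H1. lra.
    - exists (n - m)%nat. split. lia.
      exists (fcomp f 1 m z1), (fcomp f 1 m z2).
      assert (En : n = (m + (n - m))%nat) by lia.
      rewrite En, !Fshift in Hd.
      pose proof (Hb2 z1 ltac:(lra)) as D1. pose proof (Hb2 z2 ltac:(lra)) as D2.
      unfold dist in D1, D2. apply Rabs_def2 in D1. apply Rabs_def2 in D2.
      fold (val (fcomp f 1 m w)) in D1, D2. fold (val (fcomp f 1 m z1)) in D1. fold (val (fcomp f 1 m z2)) in D2.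
      split. unfold Cell. lra. split. unfold Cell. lra.
      pose proof (HN0 (m+1)%nat (n-m)%nat (fcomp f 1 m z1) ltac:(lia) ltac:(unfold N in Hm; lia)).
      pose proof (HN0 (m+1)%nat (n-m)%nat (fcomp f 1 m z2) ltac:(lia) ltac:(unfold N in Hm; lia)).
      pose proof (dist4' (fcomp f (m + 1) (n - m) (fcomp f 1 m z1)) (fcomp f (m + 1) (n - m) (fcomp f 1 m z2))
         (Nat.iter (n - m) g (fcomp f 1 m z1)) (Nat.iter (n - m) g (fcomp f 1 m z2))).
      lra. }

  assert (STEP : forall m x r u v, (N <= m)%nat -> ball x r u -> ball x r v -> del/4 <= dist (fcomp f 1 m u) (fcomp f 1 m v) ->
   exists k, (1 <= k)%nat /\ (forall j, (j <= k)%nat -> exists w1 w2, ball x r w1 /\ ball x r w2 /\ a/2 <= dist (fcomp f 1 (m+j) w1) (fcomp f 1 (m+j) w2))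
     /\ exists w1 w2, ball x r w1 /\ ball x r w2 /\ del/4 <= dist (fcomp f 1 (m+k) w1) (fcomp f 1 (m+k) w2)).
  { intros m x r u v Hm Hu Hv Hd.
    pose proof (val_bounds (fcomp f 1 m u)) as Bu. pose proof (val_bounds (fcomp f 1 m v)) as Bv.
    pose proof (RmaxRmin (val (fcomp f 1 m u)) (val (fcomp f 1 m v))) as RR.
    pose proof (Rmin_l (val (fcomp f 1 m u)) (val (fcomp f 1 m v))).
    pose proof (Rmin_r (val (fcomp f 1 m u)) (val (fcomp f 1 m v))).
    pose proof (Rmax_l (val (fcomp f 1 m u)) (val (fcomp f 1 m v))).
    pose proof (Rmax_r (val (fcomp f 1 m u)) (val (fcomp f 1 m v))).
    unfold dist in Hd. fold (val (fcomp f 1 m u)) (val (fcomp f 1 m v)) in Hd.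
    destruct (HM (Rmin (val (fcomp f 1 m u)) (val (fcomp f 1 m v))) (Rmax (val (fcomp f 1 m u)) (val (fcomp f 1 m v))))
      as [i [Hi [Hp Hq]]].
    - apply Rmin_glb; lra.
    - apply Rmax_lub; lra.
    - lra.
    - destruct (ivt01 (fcomp f 1 m) (Fcont m) u v ((INR i + /2) * (del/8))) as [w [Hw Hwv]].
      { split; lra. }
      pose proof (ball_convex x r u v w Hu Hv Hw) as Hbw.
      pose proof (REL m (ball x r) w i Hm (ball_open x r) Hbw Hwv) as Hrel.
      destruct (HA i Hi Hrel) as [k [Hk [c1 [c2 [Hc1 [Hc2 [Hdk Hall]]]]]]].
      assert (PRE : forall c, Cell (del/8) i c -> exists w', ball x r w' /\ fcomp f 1 m w' = c).
      { intros c Hcc. unfold Cell in Hcc.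
        destruct (ivt01 (fcomp f 1 m) (Fcont m) u v (val c)) as [w' [Hw' Hv']].
        { split; lra. }
        exists w'. split. exact (ball_convex x r u v w' Hu Hv Hw'). apply I01_eq; auto. }
      destruct (PRE c1 Hc1) as [w1 [Hw1 E1]]. destruct (PRE c2 Hc2) as [w2 [Hw2 E2]].
      exists k. split; auto. split.
      + intros j Hj. exists w1, w2. split; auto. split; auto.
        rewrite !Fshift, E1, E2. pose proof (Hall j Hj).
        pose proof (HN0 (m+1)%nat j c1 ltac:(lia) ltac:(unfold N in Hm; lia)).
        pose proof (HN0 (m+1)%nat j c2 ltac:(lia) ltac:(unfold N in Hm; lia)).
        pose proof (dist4 (fcomp f (m + 1) j c1) (fcomp f (m + 1) j c2) (Nat.iter j g c1) (Nat.iter j g c2)).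
        lra.
      + exists w1, w2. split; auto. split; auto.
        rewrite !Fshift, E1, E2.
        pose proof (HN0 (m+1)%nat k c1 ltac:(lia) ltac:(unfold N in Hm; lia)).
        pose proof (HN0 (m+1)%nat k c2 ltac:(lia) ltac:(unfold N in Hm; lia)).
        pose proof (dist4 (fcomp f (m + 1) k c1) (fcomp f (m + 1) k c2) (Nat.iter k g c1) (Nat.iter k g c2)).
        lra. }
  assert (IND : forall t m x r u v, (N <= m)%nat -> ball x r u -> ball x r v -> del/4 <= dist (fcomp f 1 m u) (fcomp f 1 m v) ->
   forall n, (m <= n <= m + t)%nat -> exists w1 w2, ball x r w1 /\ ball x r w2 /\ Rmin (del/4) (a/2) <= dist (fcomp f 1 n w1) (fcomp f 1 n w2)).
  { induction t as [|t IH]; intros m x r u v Hm Hu Hv Hd n Hn.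
    - assert (n = m) by lia. subst. exists u, v. split; auto. split; auto. eapply Rle_trans; [apply Rmin_l|exact Hd].
    - destruct (STEP m x r u v Hm Hu Hv Hd) as [k [Hk [Hall [w1 [w2 [Hw1 [Hw2 Hdk]]]]]]].
      destruct (le_lt_dec n (m + k)) as [Hnk|Hnk].
      + destruct (Hall (n - m)%nat ltac:(lia)) as [z1 [z2 [Hz1 [Hz2 Hz]]]].
        replace (m + (n - m))%nat with n in Hz by lia. exists z1, z2. split; auto. split; auto.
        eapply Rle_trans; [apply Rmin_r|exact Hz].
      + apply (IH (m+k)%nat x r w1 w2); auto; lia. }
  exists (Rmin (del/4) (a/2) / 2). split.
  { assert (0 < Rmin (del/4) (a/2)) by (apply Rmin_pos; lra). lra. }
  intros U [HU [x Hx]].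
  destruct (HU x Hx) as [r [Hr Hball]].
  destruct (unif_fin f Hc N x (del/2) ltac:(lra)) as [r' [Hr' Hb']].
  assert (Hrr : 0 < Rmin r r') by (apply Rmin_pos; auto).
  destruct (Hsens (ball x (Rmin r r')) (ball_neo x _ Hrr)) as [n [Hn [u [v [Hu [Hv Hd]]]]]].
  unfold ball in Hu, Hv.
  pose proof (Rmin_l r r'). pose proof (Rmin_r r r').
  destruct (le_lt_dec n N) as [HnN|HnN].
  - exfalso. pose proof (Hb' n u HnN ltac:(lra)). pose proof (Hb' n v HnN ltac:(lra)).
    pose proof (dist_tri (fcomp f 1 n u) (fcomp f 1 n x) (fcomp f 1 n v)).
    rewrite (dist_sym (fcomp f 1 n u) (fcomp f 1 n x)) in H3. lra.
  - exists n. split; auto. intros n' Hn'.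
    destruct (IND (n' - n)%nat n x r u v ltac:(lia)) with (n := n') as [w1 [w2 [Hw1 [Hw2 Hw]]]].
    + unfold ball; lra.
    + unfold ball; lra.
    + lra.
    + lia.
    + split. lia. exists w1, w2. split. apply Hball; exact Hw1. split. apply Hball; exact Hw2.
      assert (0 < Rmin (del/4) (a/2)) by (apply Rmin_pos; lra). lra.
Qed.

Lemma blockseq_fcomp f k n x : fcomp (blockseq f k) 1 n x = fcomp f 1 (k * n) x.
Proof.
  induction n as [|n IH].
  - rewrite Nat.mul_0_r. reflexivity.
  - rewrite Nat.mul_succ_r, fcomp_add.
    change (fcomp (blockseq f k) 1 (S n) x) with (blockseq f k (n + 1) (fcomp (blockseq f k) 1 n x)).
    unfold blockseq at 1. rewrite IH.
    replace (k * (n + 1 - 1) + 1)%nat with (1 + k * n)%nat by lia. reflexivity.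
Qed.

Lemma fin_max (P : nat -> nat -> Prop) L : (forall i, (i < L)%nat -> exists m0, forall n, (m0 <= n)%nat -> P i n) ->
  exists n0, (1 <= n0)%nat /\ forall i n, (i < L)%nat -> (n0 <= n)%nat -> P i n.
Proof.
  induction L as [|L IH]; intros H.
  - exists 1%nat. split; auto. intros; lia.
  - destruct IH as [n0 [H0 H1]]. { intros i Hi. apply H. lia. }
    destruct (H L ltac:(lia)) as [m0 Hm].
    exists (Nat.max n0 m0). split. lia. intros i n Hi Hn. destruct (Nat.eq_dec i L) as [->|Hne].
    + apply Hm. lia.
    + apply H1; lia.
Qed.

Lemma cof_strong f : cofin f -> strongly_multi_sensitive f.
Proof.
  intros [d [Hd HC]] v Hv. exists d. split; auto. intros U HU.
  destruct (fin_max (fun i n => in_Nset f (U i) d n) (length v)) as [n0 [H0 H1]].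
  { intros i Hi. destruct (HC (U i) (HU i Hi)) as [m0 [_ Hm]]. exists m0. exact Hm. }
  exists n0. split; auto. intros i Hi.
  assert (Hk : (1 <= nth i v 0)%nat). { rewrite Forall_forall in Hv. apply Hv. apply nth_In. auto. }
  destruct (H1 i (nth i v 0 * n0)%nat Hi ltac:(nia)) as [_ [u [w [Hu [Hw Hd']]]]].
  split. auto. exists u, w. rewrite !blockseq_fcomp. auto.
Qed.

Lemma cof_multi f : cofin f -> multi_sensitive f.
Proof.
  intros [d [Hd HC]]. exists d. split; auto. intros m V HV.
  destruct (fin_max (fun i n => in_Nset f (V i) d n) m) as [n0 [H0 H1]].
  { intros i Hi. destruct (HC (V i) (HV i Hi)) as [m0 [_ Hm]]. exists m0. exact Hm. }
  exists n0. intros i Hi. apply H1; auto.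
Qed.

Lemma N_sens f : N_sensitive f -> sensitive f.
Proof.
  intros HN. destruct (HN 1%nat (le_n 1)) as [d [Hd H]]. exists d. split; auto. intros V HV.
  destruct (H (fun _ => V) (fun i _ => HV)) as [n [Hn Hi]]. exists n.
  destruct (Hi 0%nat ltac:(simpl; lia)) as [_ [u [w [Hu [Hw Hd']]]]]. split; auto. exists u, w.
  split; auto. split; auto. cbn [nth seq] in Hd'. rewrite !blockseq_fcomp, Nat.mul_1_l in Hd'. auto.
Qed.

Lemma multi_sens f : multi_sensitive f -> sensitive f.
Proof.
  intros [d [Hd H]]. exists d. split; auto. intros V HV.
  destruct (H 1%nat (fun _ => V) (fun i _ => HV)) as [n Hn]. exists n. apply (Hn 0%nat). lia.
Qed.

Lemma strong_N f : strongly_multi_sensitive f -> N_sensitive f.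
Proof.
  intros Hs n Hn. apply Hs. rewrite Forall_forall. intros x Hx. apply in_seq in Hx. lia.
Qed.

Theorem mainTheorem8 (f : nat -> I01 -> I01) (g : I01 -> I01) :
  (forall n, (1 <= n)%nat -> continuous_I (f n)) ->
  uniform_conv f g ->
  collective_conv f g ->
  feebly_open f ->
  (strongly_multi_sensitive f <-> N_sensitive f) /\
  (N_sensitive f <-> multi_sensitive f) /\
  (multi_sensitive f <-> sensitive f).
Proof.
  intros Hc _ Hcoll _.
  assert (S1 : sensitive f -> strongly_multi_sensitive f) by (intros; apply cof_strong; eapply sens_cof; eauto).
  assert (S2 : sensitive f -> multi_sensitive f) by (intros; apply cof_multi; eapply sens_cof; eauto).
  split; [|split]; split; intros H.
  - apply strong_N; auto.
  - apply S1, N_sens; auto.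
  - apply S2, N_sens; auto.
  - apply strong_N, S1, multi_sens; auto.
  - apply multi_sens; auto.
  - apply S2; auto.
Qed.
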